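(* Let $r\ge2$ be an integer and $\psi\in C_p(\mathbb{R})$. Assume there is a constant $m>0$ such that $m\,d(x)\le\psi(x)$ for all $x\in[0,1]$. Then $$\frac{mr}{r-1}\,x(1-x)\le m\,\tau_r(x)\le U_\psi(x),\qquad x\in[0,1].$$
   Context: $C_p(\mathbb{R})$ denotes the set of all continuous functions $f:\mathbb{R}\to\mathbb{R}$ periodic with period $1$ with $f(0)=0$. $d(x)=\min\{|x-z|: z\in\mathbb{Z}\}$ is the distance to $\mathbb{Z}$. For $\psi\in C_p(\mathbb{R})$, $U_\psi(x)=\sum_{j=0}^\infty r^{-j}\psi(r^jx)$, and $\tau_r=U_d$, i.e. $\tau_r(x)=\sum_{j=0}^\infty r^{-j}d(r^jx)$. *)

(* Defs.v *)
From Stdlib Require Import Reals.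
From Coquelicot Require Import Coquelicot.
Open Scope R_scope.

Definition Cp (f : R -> R) : Prop :=
  (forall x, continuity_pt f x) /\ (forall x, f (x + 1) = f x) /\ f 0 = 0.

(* d(x) = min{|x - z| : z in Z}, the distance from x to the nearest integer;
   the two candidates are floor x and floor x + 1. *)
Definition dist_Z (x : R) : R :=
  Rmin (Rabs (x - IZR (Int_part x))) (Rabs (x - IZR (Int_part x + 1))).

Definition U (r : nat) (psi : R -> R) (x : R) : R :=
  Series (fun j : nat => (/ INR r) ^ j * psi (INR r ^ j * x)).

Definition tau (r : nat) (x : R) : R := U r dist_Z x.

(* Main.v *)
Require Import Defs.
From Stdlib Require Import Reals Lra Lia Psatz ZArith.
From Coquelicot Require Import Coquelicot.
Open Scope R_scope.

Definition frac (y : R) : R := y - IZR (Int_part y).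

Lemma Int_part_unique (y : R) (n : Z) : IZR n <= y < IZR n + 1 -> Int_part y = n.
Proof.
  intros [H1 H2]. unfold Int_part.
  assert (E : (n + 1)%Z = up y).
  { apply tech_up; rewrite plus_IZR; lra. }
  lia.
Qed.

Lemma frac_bounds (y : R) : 0 <= frac y < 1.
Proof. unfold frac. destruct (base_Int_part y). lra. Qed.

Lemma Int_part_shift (y : R) (z : Z) : Int_part (y + IZR z) = (Int_part y + z)%Z.
Proof.
  apply Int_part_unique. destruct (base_Int_part y). rewrite plus_IZR. lra.
Qed.

Lemma frac_shift (y : R) (z : Z) : frac (y + IZR z) = frac y.
Proof. unfold frac. rewrite Int_part_shift, plus_IZR. ring. Qed.

Lemma dist_Z_frac (y : R) : dist_Z y = Rmin (frac y) (1 - frac y).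
Proof.
  unfold dist_Z. pose proof (frac_bounds y). unfold frac in *.
  rewrite plus_IZR. rewrite (Rabs_right (y - _)) by lra.
  rewrite Rabs_left1 by lra. f_equal. ring.
Qed.

Lemma frac_frac (y : R) : frac (frac y) = frac y.
Proof.
  unfold frac at 1 2. replace (y - IZR (Int_part y)) with (y + IZR (- Int_part y)) by (rewrite opp_IZR; ring).
  fold (frac (y + IZR (- Int_part y))). rewrite frac_shift. reflexivity.
Qed.

Lemma frac_id (y : R) : 0 <= y < 1 -> frac y = y.
Proof.
  intros H. unfold frac. rewrite (Int_part_unique y 0) by (simpl; lra). simpl. ring.
Qed.

Lemma periodic_Z (f : R -> R) : (forall x, f (x + 1) = f x) ->
  forall y z, f (y + IZR z) = f y.
Proof.
  intros Hp.
  assert (Hn : forall n y, f (y + INR n) = f y).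
  { induction n; intros y. simpl. rewrite Rplus_0_r; reflexivity.
    rewrite S_INR, <- Rplus_assoc, Hp. apply IHn. }
  intros y z. destruct (Z_le_gt_dec 0 z) as [Hz|Hz].
  - rewrite <- (Z2Nat.id z Hz), <- INR_IZR_INZ. apply Hn.
  - rewrite <- (Hn (Z.to_nat (- z)) (y + IZR z)).
    rewrite INR_IZR_INZ, Z2Nat.id by lia. rewrite opp_IZR. f_equal. ring.
Qed.

Lemma f_frac (f : R -> R) : (forall x, f (x + 1) = f x) -> forall y, f y = f (frac y).
Proof.
  intros Hp y. unfold frac. replace (y - IZR (Int_part y)) with (y + IZR (- Int_part y)) by (rewrite opp_IZR; ring).
  symmetry. apply periodic_Z. exact Hp.
Qed.

Definition pp (y : R) := frac y * (1 - frac y).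

Lemma keyK (r : nat) (y : R) : (2 <= r)%nat ->
  INR r / (INR r - 1) * pp y <= dist_Z y + INR r / (INR r - 1) * pp (INR r * y) / INR r.
Proof.
  intros Hr. set (rr := INR r).
  assert (Hrr : 2 <= rr) by (unfold rr; replace 2 with (INR 2) by (simpl; ring); apply le_INR; exact Hr).
  assert (E1 : frac (rr * y) = frac (rr * frac y)).
  { unfold frac at 3. replace (rr * (y - IZR (Int_part y))) with (rr * y + IZR (- (Z.of_nat r * Int_part y))).
    - rewrite frac_shift. reflexivity.
    - rewrite opp_IZR, mult_IZR, <- INR_IZR_INZ. unfold rr. ring. }
  unfold pp. rewrite E1, dist_Z_frac.
  pose proof (frac_bounds y) as Hu. set (u := frac y) in *.
  pose proof (frac_bounds (rr * u)) as Ht.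
  assert (Et : frac (rr * u) = rr * u - IZR (Int_part (rr * u))) by reflexivity.
  set (t := frac (rr * u)) in *. set (k := Int_part (rr * u)) in *.
  assert (Hk0 : (0 <= k)%Z).
  { apply le_IZR. apply Rnot_lt_le; intro H. assert (IZR k <= -1) by (apply IZR_le; apply lt_IZR in H; lia).
    nra. }
  assert (Hk1 : (k <= Z.of_nat r - 1)%Z).
  { assert (IZR k < IZR (Z.of_nat r)) by (rewrite <- INR_IZR_INZ; fold rr; nra).
    apply lt_IZR in H. lia. }
  set (K := IZR k).
  assert (HK1 : K * (K - 1) >= 0).
  { unfold K. destruct (Z.eq_dec k 0) as [->|Hne]. simpl; lra.
    assert (1 <= IZR k) by (apply IZR_le; lia). nra. }
  assert (HK2 : (rr - 1 - K) * (rr - 2 - K) >= 0).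
  { unfold K, rr. rewrite INR_IZR_INZ.
    destruct (Z.eq_dec k (Z.of_nat r - 1)) as [->|Hne].
    - rewrite minus_IZR. simpl. ring_simplify. lra.
    - assert (IZR k <= IZR (Z.of_nat r) - 2) by (rewrite <- (minus_IZR _ 2); apply IZR_le; lia). nra. }
  assert (HK0 : 0 <= K) by (unfold K; apply IZR_le; exact Hk0).
  assert (HKr : K <= rr - 1).
  { unfold K, rr. rewrite INR_IZR_INZ. rewrite <- (minus_IZR _ 1). apply IZR_le. lia. }
  assert (Eu : u = (K + t) / rr) by (unfold K; rewrite Et; field; lra).
  assert (EA : rr / (rr - 1) * (u * (1 - u)) - rr / (rr - 1) * (t * (1 - t)) / rr
               = (K * (rr - K) - 2 * K * t + (rr - 1) * t ^ 2) / (rr * (rr - 1))).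
  { rewrite Eu. field. lra. }
  assert (Hpos : 0 < / (rr * (rr - 1))) by (apply Rinv_0_lt_compat; nra).
  assert (Htt : 0 <= (rr - 1) * (t * (1 - t))) by (apply Rmult_le_pos; nra).
  assert (HKt : 0 <= K * t) by nra.
  assert (A1 : (K * (rr - K) - 2 * K * t + (rr - 1) * t ^ 2) / (rr * (rr - 1)) <= u).
  { replace u with (((rr - 1) * (K + t)) / (rr * (rr - 1))) by (rewrite Eu; field; lra).
    unfold Rdiv. apply Rmult_le_compat_r; [lra|]. nra. }
  assert (A2 : (K * (rr - K) - 2 * K * t + (rr - 1) * t ^ 2) / (rr * (rr - 1)) <= 1 - u).
  { replace (1 - u) with (((rr - 1) * (rr - K - t)) / (rr * (rr - 1))) by (rewrite Eu; field; lra).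
    unfold Rdiv. apply Rmult_le_compat_r; [lra|]. nra. }
  assert (Rmin u (1 - u) >= (K * (rr - K) - 2 * K * t + (rr - 1) * t ^ 2) / (rr * (rr - 1))).
  { unfold Rmin. destruct (Rle_dec u (1 - u)); lra. }
  lra.
Qed.

Lemma dist_Z_bounds y : 0 <= dist_Z y <= 1.
Proof.
  rewrite dist_Z_frac. pose proof (frac_bounds y). unfold Rmin. destruct Rle_dec; lra.
Qed.

Lemma pp_bounds y : 0 <= pp y <= 1/4.
Proof. unfold pp. pose proof (frac_bounds y). pose proof (pow2_ge_0 (frac y - 1/2)). split; nra. Qed.

Lemma iterK (r : nat) (y : R) : (2 <= r)%nat -> forall n,
  INR r / (INR r - 1) * pp y <=
  sum_n (fun j => (/ INR r) ^ j * dist_Z (INR r ^ j * y)) n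
  + (/ INR r) ^ (S n) * (INR r / (INR r - 1) * pp (INR r ^ (S n) * y)).
Proof.
  intros Hr. set (rr := INR r).
  assert (Hrr : 2 <= rr) by (unfold rr; replace 2 with (INR 2) by (simpl; ring); apply le_INR; exact Hr).
  set (c := rr / (rr - 1)).
  induction n.
  - rewrite sum_O. pose proof (keyK r y Hr) as H. fold rr c in H.
    simpl. rewrite !Rmult_1_r, !Rmult_1_l. unfold Rdiv in H. lra.
  - rewrite sum_Sn. change plus with Rplus.
    pose proof (keyK r (rr ^ S n * y) Hr) as H. fold rr c in H.
    assert (Hp : 0 <= (/ rr) ^ S n) by (apply pow_le; apply Rlt_le, Rinv_0_lt_compat; lra).
    apply Rmult_le_compat_l with (r := (/ rr) ^ S n) in H; [|exact Hp].
    replace (rr * (rr ^ S n * y)) with (rr ^ S (S n) * y) in H by (simpl; ring).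
    replace ((/ rr) ^ S (S n) * (c * pp (rr ^ S (S n) * y)))
      with ((/ rr) ^ S n * (c * pp (rr ^ S (S n) * y) / rr)) by (simpl; field; lra).
    lra.
Qed.

Lemma ex_series_d (r : nat) (y : R) : (2 <= r)%nat ->
  ex_series (fun j => (/ INR r) ^ j * dist_Z (INR r ^ j * y)).
Proof.
  intros Hr. set (rr := INR r).
  assert (Hrr : 2 <= rr) by (unfold rr; replace 2 with (INR 2) by (simpl; ring); apply le_INR; exact Hr).
  apply (@ex_series_le R_AbsRing R_CompleteNormedModule _ (fun j => (/ rr) ^ j)).
  - intros n. change (norm ((/ rr) ^ n * dist_Z (rr ^ n * y))) with (Rabs ((/ rr) ^ n * dist_Z (rr ^ n * y))).
    assert (Hp : 0 <= (/ rr) ^ n) by (apply pow_le; apply Rlt_le, Rinv_0_lt_compat; lra).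
    pose proof (dist_Z_bounds (rr ^ n * y)).
    rewrite Rabs_right by nra. nra.
  - apply ex_series_geom. rewrite Rabs_right.
    + rewrite <- Rinv_1. apply Rinv_lt_contravar; lra.
    + apply Rle_ge, Rlt_le, Rinv_0_lt_compat; lra.
Qed.

Lemma lower (r : nat) (y : R) : (2 <= r)%nat ->
  INR r / (INR r - 1) * pp y <= tau r y.
Proof.
  intros Hr. set (rr := INR r).
  assert (Hrr : 2 <= rr) by (unfold rr; replace 2 with (INR 2) by (simpl; ring); apply le_INR; exact Hr).
  set (c := rr / (rr - 1)).
  assert (Hc : 0 < c) by (unfold c; apply Rdiv_lt_0_compat; lra).
  set (a := fun j => (/ rr) ^ j * dist_Z (rr ^ j * y)).
  assert (Ha : is_lim_seq (sum_n a) (Series a)).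
  { apply Series_correct. apply ex_series_d. exact Hr. }
  assert (Hg : is_lim_seq (fun n => (/ rr) ^ (S n) * (c / 4)) 0).
  { replace 0 with (0 * (c / 4)) by ring.
    apply is_lim_seq_mult'; [|apply is_lim_seq_const].
    apply (is_lim_seq_incr_1 (fun n => (/ rr) ^ n)).
    apply is_lim_seq_geom. rewrite Rabs_right.
    + rewrite <- Rinv_1. apply Rinv_lt_contravar; lra.
    + apply Rle_ge, Rlt_le, Rinv_0_lt_compat; lra. }
  pose proof (is_lim_seq_plus' _ _ _ _ Ha Hg) as Hs.
  assert (Hle : forall n, c * pp y <= sum_n a n + (/ rr) ^ S n * (c / 4)).
  { intros n. pose proof (iterK r y Hr n) as Hn. fold rr c a in Hn.
    assert (Hp : 0 <= (/ rr) ^ S n) by (apply pow_le; apply Rlt_le, Rinv_0_lt_compat; lra).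
    pose proof (pp_bounds (rr ^ S n * y)).
    assert ((/ rr) ^ S n * (c * pp (rr ^ S n * y)) <= (/ rr) ^ S n * (c / 4)).
    { apply Rmult_le_compat_l; [exact Hp|]. nra. }
    lra. }
  pose proof (is_lim_seq_le (fun _ => c * pp y) _ _ _ Hle (is_lim_seq_const _) Hs) as H.
  simpl in H. unfold tau, U. fold rr. fold a. lra.
Qed.

Theorem lemma3p3 (r : nat) (psi : R -> R) (m : R) :
  (2 <= r)%nat ->
  Cp psi ->
  0 < m ->
  (forall x, 0 <= x <= 1 -> m * dist_Z x <= psi x) ->
  forall x, 0 <= x <= 1 ->
    m * INR r / (INR r - 1) * x * (1 - x) <= m * tau r x /\
    m * tau r x <= U r psi x.
Proof.
  intros Hr [Hcont [Hper H0]] Hm Hmd x Hx.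
  set (rr := INR r).
  assert (Hrr : 2 <= rr) by (unfold rr; replace 2 with (INR 2) by (simpl; ring); apply le_INR; exact Hr).
  split.
  - pose proof (lower r x Hr) as L. fold rr in L.
    assert (Epp : pp x = x * (1 - x)).
    { unfold pp. destruct (Req_dec x 1) as [->|Hne].
      - replace 1 with (0 + IZR 1) at 1 by (simpl; ring). rewrite frac_shift, frac_id by lra. ring.
      - rewrite frac_id by lra. reflexivity. }
    rewrite Epp in L.
    replace (m * rr / (rr - 1) * x * (1 - x)) with (m * (rr / (rr - 1) * (x * (1 - x)))) by (field; lra).
    apply Rmult_le_compat_l; lra.
  - assert (Hall : forall z, m * dist_Z z <= psi z).
    { intros z. rewrite (f_frac psi Hper z).
      assert (dist_Z z = dist_Z (frac z)) by (rewrite !dist_Z_frac, frac_frac; reflexivity).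
      rewrite H. apply Hmd. pose proof (frac_bounds z). lra. }
    assert (Hpsi0 : forall z, 0 <= psi z).
    { intros z. pose proof (Hall z). pose proof (dist_Z_bounds z). nra. }
    destruct (continuity_ab_maj psi 0 1 ltac:(lra) (fun c _ => Hcont c)) as [Mx [HM _]].
    set (M := psi Mx).
    assert (HallM : forall z, psi z <= M).
    { intros z. rewrite (f_frac psi Hper z). apply HM. pose proof (frac_bounds z). lra. }
    unfold tau, U. fold rr. rewrite <- Series_scal_l.
    apply Series_le.
    + intros n. assert (Hp : 0 <= (/ rr) ^ n) by (apply pow_le; apply Rlt_le, Rinv_0_lt_compat; lra).
      pose proof (dist_Z_bounds (rr ^ n * x)). pose proof (Hall (rr ^ n * x)). split; [apply Rmult_le_pos; [lra|apply Rmult_le_pos; lra]|]. replace (m * ((/ rr) ^ n * dist_Z (rr ^ n * x))) with ((/ rr) ^ n * (m * dist_Z (rr ^ n * x))) by ring. apply Rmult_le_compat_l; lra.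
    + apply (@ex_series_le R_AbsRing R_CompleteNormedModule _ (fun n => scal M ((/ rr) ^ n))).
      * intros n. change (norm ((/ rr) ^ n * psi (rr ^ n * x))) with (Rabs ((/ rr) ^ n * psi (rr ^ n * x))).
        change (scal M ((/ rr) ^ n)) with (M * (/ rr) ^ n).
        assert (Hp : 0 <= (/ rr) ^ n) by (apply pow_le; apply Rlt_le, Rinv_0_lt_compat; lra).
        pose proof (Hpsi0 (rr ^ n * x)). pose proof (HallM (rr ^ n * x)).
        rewrite Rabs_right by nra. nra.
      * apply (@ex_series_scal_l R_AbsRing R_NormedModule M (fun n => (/ rr) ^ n)). apply ex_series_geom. rewrite Rabs_right.
        -- rewrite <- Rinv_1. apply Rinv_lt_contravar; lra.
        -- apply Rle_ge, Rlt_le, Rinv_0_lt_compat; lra.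
Qed.
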